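(* Let $P$ be a finite poset and $R$ a restriction function on $P$. If $f\in\mathrm{Inc}^R(P)$ has two distinct raisable elements, then $f$ is not meet-irreducible in $\mathrm{Inc}^R(P)$.
   Context: A restriction function assigns to each $p\in P$ a nonempty finite set $R(p)\subseteq\mathbb{Z}$. $\mathrm{Inc}^R(P)$ is the set of $f:P\to\mathbb{Z}$ with $f(p)\in R(p)$ and $p_1<p_2\Rightarrow f(p_1)<f(p_2)$, ordered pointwise, a lattice with pointwise min as meet. An element $p\in P$ is raisable in $f$ if there exists $g\in\mathrm{Inc}^R(P)$ with $f(p)<g(p)$ and $g(p')=f(p')$ for all $p'\ne p$. An element $x$ of a lattice is meet-irreducible if it is not the top element and $x=y\wedge z$ implies $x=y$ or $x=z$. *)

(* Defs.v *)
From HB Require Import structures.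
From mathcomp Require Import all_boot all_order all_algebra.
Set Implicit Arguments. Unset Strict Implicit. Unset Printing Implicit Defensive.
Import Order.TTheory GRing.Theory Num.Theory.

(* A finite poset P is a [finPOrderType d]; a restriction function assigns to
   each element a nonempty finite set of integers, represented as a nonempty
   sequence [R p : seq int] (membership [x \in R p]). *)

Definition restriction (d : Order.disp_t) (P : finPOrderType d)
  (R : P -> seq int) : Prop := forall p, R p != [::].

Definition inc (d : Order.disp_t) (P : finPOrderType d)
  (R : P -> seq int) (f : P -> int) : Prop :=
  (forall p, f p \in R p) /\ (forall p1 p2 : P, (p1 < p2)%O -> (f p1 < f p2)%R).

Definition raisable (d : Order.disp_t) (P : finPOrderType d)
  (R : P -> seq int) (f : P -> int) (p : P) : Prop :=
  exists g : P -> int, inc R g /\ (f p < g p)%R /\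
    (forall p', p' != p -> g p' = f p').

Definition is_top (d : Order.disp_t) (P : finPOrderType d)
  (R : P -> seq int) (f : P -> int) : Prop :=
  inc R f /\ forall g, inc R g -> forall p, (g p <= f p)%R.

Definition fmeet (d : Order.disp_t) (P : finPOrderType d)
  (g h : P -> int) : P -> int := fun p => Num.min (g p) (h p).

Definition meet_irreducible (d : Order.disp_t) (P : finPOrderType d)
  (R : P -> seq int) (f : P -> int) : Prop :=
  inc R f /\ ~ is_top R f /\
  forall g h, inc R g -> inc R h -> f =1 fmeet g h -> f =1 g \/ f =1 h.

(* Main.v *)
Require Import Defs.
From mathcomp Require Import all_boot all_order all_algebra.
Import Order.TTheory GRing.Theory Num.Theory.

Theorem lemma2p5 (d : Order.disp_t) (P : finPOrderType d)
  (R : P -> seq int) (f : P -> int) :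
  restriction R -> inc R f ->
  (exists p1 p2 : P, p1 != p2 /\ raisable R f p1 /\ raisable R f p2) ->
  ~ meet_irreducible R f.
Proof.
move=> _ incf [p1 [p2 [np [[g1 [i1 [l1 e1]]] [g2 [i2 [l2 e2]]]]]]] [_ [_ H]].
have E : f =1 fmeet g1 g2.
  move=> p; rewrite /fmeet.
  case: (eqVneq p p1) => [->|n1].
    rewrite (e2 p1 np) ; apply/esym/min_r; exact: ltW.
  rewrite (e1 p n1).
  case: (eqVneq p p2) => [->|n2].
    apply/esym/min_l; exact: ltW.
  by rewrite (e2 p n2) minxx.
case: (H g1 g2 i1 i2 E) => F.
  by move: l1; rewrite F ltxx.
by move: l2; rewrite F ltxx.
Qed.
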